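(* For every constant $C$ with $0<C<1/\log 4$ there exists a constant $E>0$ depending on $C$ such that, for all sufficiently large positive integers $N$ and all $x\in\left[N,\exp\!\left(C(\log N)^2\right)\right]$, \[ |\varrho_N(x)|\le\exp\!\left(-\frac{\pi^2}{400^2}\exp\!\left(E\sqrt{\log x}\right)\right). \]
   Context: For a positive integer $N$ and real $x$, $\varrho_N(x):=\prod_{n=1}^N\cos(\pi x/n)$. *)

(* Defs.v *)
From Stdlib Require Import Reals.
Open Scope R_scope.

Fixpoint rho (N : nat) (x : R) : R :=
  match N with
  | O => 1
  | S m => rho m x * cos (PI * x / INR (S m))
  end.

(* Main.v *)
Require Import Defs.
From Stdlib Require Import Reals Lra Lia Psatz ZArith Classical.
Open Scope R_scope.

Lemma cos_ub2 (a : R) : - PI / 2 <= a -> a <= PI / 2 -> cos a <= 1 - a^2/2 + a^4/24.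
Proof.
  intros H1 H2. destruct (cos_bound a 0 H1 H2) as [_ H].
  unfold cos_approx, cos_term in H. simpl in H.
  replace (INR (fact 4)) with 24 in H by (simpl; lra).
  replace (INR (fact 2)) with 2 in H by (simpl; lra).
  simpl in H. replace (INR (fact 0)) with 1 in H by (simpl; lra).
  lra.
Qed.

Lemma cos_small (s d : R) : 0 < d -> d < Rabs s -> Rabs s <= 1/2 ->
  Rabs (cos (PI * s)) <= 1 - 3 * d^2.
Proof.
  intros Hd H1 H2.
  assert (HP1 := PI2_3_2). assert (HP2 := PI_4).
  assert (E : cos (PI * s) = cos (PI * Rabs s)).
  { unfold Rabs; destruct (Rcase_abs s). rewrite <- cos_neg. f_equal; ring. reflexivity. }
  rewrite E. set (u := Rabs s) in *. 
  assert (0 <= u) by (unfold u; apply Rabs_pos).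
  assert (- PI / 2 <= PI * u) by nra.
  assert (PI * u <= PI / 2) by nra.
  assert (Hc := cos_ub2 _ H0 H3).
  assert (0 <= cos (PI * u)) by (apply cos_ge_0; lra).
  rewrite Rabs_right by lra.
  assert ((PI*u)^2 <= 4) by nra.
  assert (PI*u >= 3*d) by nra.
  assert ((PI*u)^2 >= 9 * d^2) by nra.
  nra.
Qed.

Lemma cos_shift_nat (n : nat) (y : R) : Rabs (cos (y + INR n * PI)) = Rabs (cos y).
Proof.
  induction n. simpl. rewrite Rmult_0_l, Rplus_0_r; reflexivity.
  rewrite S_INR. replace (y + (INR n + 1) * PI) with ((y + INR n * PI) + PI) by ring.
  rewrite neg_cos, Rabs_Ropp. exact IHn.
Qed.

Lemma cos_shift_Z (z : Z) (y : R) : Rabs (cos (y + IZR z * PI)) = Rabs (cos y).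
Proof.
  destruct (Z_le_gt_dec 0 z) as [Hz|Hz].
  - rewrite <- (Z2Nat.id z Hz), <- INR_IZR_INZ. apply cos_shift_nat.
  - assert (Hz' : (0 <= - z)%Z) by lia.
    pose proof (cos_shift_nat (Z.to_nat (- z)) (y + IZR z * PI)) as H.
    rewrite INR_IZR_INZ, Z2Nat.id in H by exact Hz'.
    rewrite opp_IZR in H.
    replace (y + IZR z * PI + - IZR z * PI) with y in H by ring.
    symmetry; exact H.
Qed.

Lemma cos_far (t d : R) : 0 < d -> d <= 1/2 -> (forall z, Rabs (t - IZR z) > d) ->
  Rabs (cos (PI * t)) <= 1 - 3 * d^2.
Proof.
  intros Hd Hd2 H.
  destruct (archimed t) as [A1 A2].
  assert (Hz : exists z, Rabs (t - IZR z) <= 1/2).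
  { destruct (Rle_dec (t - IZR (up t - 1)) (1/2)).
    - exists (up t - 1)%Z. rewrite minus_IZR in *. rewrite Rabs_right; lra.
    - exists (up t). rewrite minus_IZR in n. rewrite Rabs_left; lra. }
  destruct Hz as [z Hz].
  replace (PI * t) with (PI * (t - IZR z) + IZR z * PI) by ring.
  rewrite cos_shift_Z. apply cos_small; auto. specialize (H z); lra.
Qed.

Fixpoint Pr (t : R) (k : nat) : R :=
  match k with O => t | S k' => Pr t k' * (t + INR (S k')) end.

Fixpoint dif (f : R -> R) (k : nat) (t : R) : R :=
  match k with O => f t | S k' => dif f k' t - dif f k' (t + 1) end.

Lemma Pr_pos (t : R) (k : nat) : 0 < t -> 0 < Pr t k.
Proof.
  intros Ht. induction k. exact Ht.
  change (Pr t (S k)) with (Pr t k * (t + INR (S k))).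
  apply Rmult_lt_0_compat; auto. pose proof (pos_INR (S k)); lra.
Qed.

Lemma Pr_shift (t : R) (k : nat) : Pr t (S k) = t * Pr (t + 1) k.
Proof.
  induction k. simpl. ring.
  change (Pr t (S (S k))) with (Pr t (S k) * (t + INR (S (S k)))).
  rewrite IHk. change (Pr (t+1) (S k)) with (Pr (t+1) k * (t + 1 + INR (S k))).
  rewrite !S_INR. ring.
Qed.

Lemma dif_inv (x : R) (k : nat) (t : R) : 0 < t ->
  dif (fun u => x / u) k t = x * INR (fact k) / Pr t k.
Proof.
  revert t. induction k; intros t Ht.
  - simpl. field. lra.
  - simpl dif. rewrite IHk by lra. rewrite IHk by lra.
    assert (P1 := Pr_pos t k Ht). assert (P2 := Pr_pos (t+1) k ltac:(lra)).
    assert (E : Pr t (S k) = t * Pr (t + 1) k) by apply Pr_shift.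
    assert (E2 : Pr t k * (t + INR (S k)) = t * Pr (t + 1) k) by (rewrite <- E; reflexivity).
    rewrite E. rewrite fact_simpl, mult_INR, S_INR. rewrite S_INR in E2.
    pose proof (pos_INR k).
    assert (EP : Pr t k = t * Pr (t + 1) k / (t + INR k + 1)).
    { rewrite <- E2. field. lra. }
    rewrite EP. field. split; lra.
Qed.

Lemma dif_approx (f : R -> R) (d : R) (k : nat) (t : R) :
  (forall j, (j <= k)%nat -> exists z : Z, Rabs (f (t + INR j) - IZR z) <= d) ->
  exists z : Z, Rabs (dif f k t - IZR z) <= 2 ^ k * d.
Proof.
  revert t. induction k; intros t H.
  - destruct (H 0%nat (le_n 0)) as [z Hz]. exists z. simpl. simpl in Hz.
    rewrite Rplus_0_r in Hz. lra.
  - destruct (IHk t) as [z1 H1].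
    { intros j Hj. apply H. lia. }
    destruct (IHk (t+1)) as [z2 H2].
    { intros j Hj. destruct (H (S j) ltac:(lia)) as [z Hz]. exists z.
      rewrite S_INR in Hz. replace (t + 1 + INR j) with (t + (INR j + 1)) by ring. exact Hz. }
    exists (z1 - z2)%Z. simpl dif. rewrite minus_IZR.
    replace (dif f k t - dif f k (t + 1) - (IZR z1 - IZR z2))
      with ((dif f k t - IZR z1) - (dif f k (t + 1) - IZR z2)) by ring.
    eapply Rle_trans. apply Rabs_triang. rewrite Rabs_Ropp. simpl. lra.
Qed.

Lemma block_bad (x : R) (n k : nat) : (1 <= n)%nat ->
  2 * (x * INR (fact k)) <= Pr (INR n) k <= 4 * (x * INR (fact k)) ->
  exists j, (j <= k)%nat /\
    forall z : Z, Rabs (x / INR (n + j) - IZR z) > / (8 * 2 ^ k).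
Proof.
  intros Hn [H1 H2].
  assert (Hn' : 0 < INR n) by (apply lt_0_INR; lia).
  assert (HP := Pr_pos _ k Hn').
  assert (Hpk : 0 < 2 ^ k) by (apply pow_lt; lra).
  destruct (classic (exists j, (j <= k)%nat /\
    forall z : Z, Rabs (x / INR (n + j) - IZR z) > / (8 * 2 ^ k))) as [?|Hno]; auto.
  exfalso.
  destruct (dif_approx (fun u => x / u) (/ (8 * 2 ^ k)) k (INR n)) as [z Hz].
  { intros j Hj. destruct (classic (exists z : Z, Rabs (x / (INR n + INR j) - IZR z) <= / (8 * 2 ^ k))) as [?|Hz]; auto.
    exfalso. apply Hno. exists j. split; auto. intros z. rewrite plus_INR.
    apply Rnot_le_gt. intro Hc. apply Hz. exists z. exact Hc. }
  rewrite dif_inv in Hz by exact Hn'.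
  replace (2 ^ k * / (8 * 2 ^ k)) with (/8) in Hz by (field; lra).
  set (W := x * INR (fact k)) in *.
  assert (0 < W) by lra.
  assert (W / Pr (INR n) k <= 1/2).
  { apply (Rmult_le_reg_r (Pr (INR n) k)); auto. field_simplify; lra. }
  assert (1/4 <= W / Pr (INR n) k).
  { apply (Rmult_le_reg_r (Pr (INR n) k)); auto. field_simplify; lra. }
  assert (Zb : 0 < IZR z < 1) by (unfold Rabs in Hz; destruct (Rcase_abs _) in Hz; lra).
  destruct Zb as [Z1 Z2]. apply lt_IZR in Z1. apply lt_IZR in Z2. lia.
Qed.

Lemma rho_le1 (m : nat) (x : R) : Rabs (rho m x) <= 1.
Proof.
  induction m. simpl. rewrite Rabs_R1; lra.
  change (rho (S m) x) with (rho m x * cos (PI * x / INR (S m))). rewrite Rabs_mult.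
  assert (Hc : Rabs (cos (PI * x / INR (S m))) <= 1) by (apply Rabs_le; apply COS_bound).
  pose proof (Rabs_pos (rho m x)). pose proof (Rabs_pos (cos (PI * x / INR (S m)))). nra.
Qed.

Lemma rho_mono (m m' : nat) (x : R) : (m <= m')%nat -> Rabs (rho m' x) <= Rabs (rho m x).
Proof.
  induction 1. lra.
  change (rho (S m0) x) with (rho m0 x * cos (PI * x / INR (S m0))). rewrite Rabs_mult.
  assert (Hc : Rabs (cos (PI * x / INR (S m0))) <= 1) by (apply Rabs_le; apply COS_bound).
  pose proof (Rabs_pos (rho m0 x)). pose proof (Rabs_pos (cos (PI * x / INR (S m0)))). nra.
Qed.

Lemma rho_block (x q : R) (n k j : nat) : (j <= k)%nat -> 0 <= q ->
  Rabs (cos (PI * x / INR (S (n + j)))) <= q ->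
  Rabs (rho (S (n + k)) x) <= q * Rabs (rho n x).
Proof.
  intros Hj Hq Hc.
  eapply Rle_trans. apply (rho_mono (S (n + j))). lia.
  change (rho (S (n+j)) x) with (rho (n+j) x * cos (PI * x / INR (S (n+j)))). rewrite Rabs_mult.
  assert (Rabs (rho (n + j) x) <= Rabs (rho n x)) by (apply rho_mono; lia).
  pose proof (Rabs_pos (rho (n + j) x)). pose proof (Rabs_pos (cos (PI * x / INR (S (n + j))))). nra.
Qed.

Lemma rho_iter (x q : R) (a k B : nat) : 0 <= q ->
  (forall i, (i < B)%nat -> exists j, (j <= k)%nat /\
     Rabs (cos (PI * x / INR (S (a + i * (k + 1) + j)))) <= q) ->
  Rabs (rho (a + B * (k + 1)) x) <= q ^ B.
Proof.
  intros Hq. induction B; intros H.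
  - simpl. rewrite Nat.add_0_r. apply rho_le1.
  - destruct (H B ltac:(lia)) as [j [Hj Hc]].
    replace (a + S B * (k + 1))%nat with (S (a + B * (k + 1) + k)) by lia.
    eapply Rle_trans. apply (rho_block x q _ k j Hj Hq Hc).
    simpl. apply Rmult_le_compat_l; [exact Hq|]. apply IHB. intros i Hi. apply H. lia.
Qed.

Lemma Pr_unfold (t : R) (k : nat) : Pr t (S k) = Pr t k * (t + INR (S k)).
Proof. reflexivity. Qed.

Lemma Pr_mono (t t' : R) (k : nat) : 0 < t -> t <= t' -> Pr t k <= Pr t' k.
Proof.
  intros H1 H2. induction k. simpl; lra.
  rewrite !Pr_unfold. pose proof (Pr_pos t k H1). pose proof (pos_INR (S k)).
  apply Rmult_le_compat; lra.
Qed.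

Lemma Pr_lower (t : R) (k : nat) : 0 < t -> t ^ (S k) <= Pr t k.
Proof.
  intros H. induction k. simpl; lra.
  rewrite Pr_unfold. change (t ^ S (S k)) with (t * t ^ (S k)).
  pose proof (pos_INR (S k)). pose proof (pow_lt t (S k) H).
  rewrite Rmult_comm. apply Rmult_le_compat; lra.
Qed.

Lemma Pr_upper (t : R) (k : nat) : 0 < t -> Pr t k <= (t + INR k) ^ (S k).
Proof.
  intros H. induction k. simpl; lra.
  rewrite Pr_unfold. change ((t + INR (S k)) ^ S (S k)) with ((t + INR (S k)) * (t + INR (S k)) ^ (S k)).
  pose proof (Pr_pos t k H). rewrite S_INR in *. pose proof (pos_INR k).
  rewrite Rmult_comm. apply Rmult_le_compat; try lra.
  eapply Rle_trans. apply IHk. apply pow_incr. lra.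
Qed.

Lemma Pr_shift_bound (t s : R) (k : nat) : 0 < t -> 0 <= s ->
  Pr (t + s) k <= Pr t k * (1 + s / t) ^ (S k).
Proof.
  intros Ht Hs. induction k.
  - simpl. replace (t * ((1 + s / t) * 1)) with (t + s) by (field; lra). lra.
  - rewrite !Pr_unfold. change ((1 + s / t) ^ S (S k)) with ((1 + s/t) * (1 + s / t) ^ (S k)).
    pose proof (pos_INR (S k)).
    assert (0 <= s / t) by (unfold Rdiv; apply Rmult_le_pos; [lra | apply Rlt_le, Rinv_0_lt_compat; lra]).
    assert (t + s + INR (S k) <= (t + INR (S k)) * (1 + s / t)).
    { replace ((t + INR (S k)) * (1 + s / t)) with (t + s + INR (S k) + INR (S k) * (s / t)) by (field; lra).
      nra. }
    pose proof (Pr_pos t k Ht). pose proof (pow_le (1 + s/t) (S k) ltac:(lra)).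
    pose proof (Pr_pos (t+s) k ltac:(lra)).
    apply Rle_trans with ((Pr t k * (1 + s / t) ^ S k) * ((t + INR (S k)) * (1 + s / t))).
    apply Rmult_le_compat; try lra.
    right; ring.
Qed.

Lemma pow_exp (a : R) (n : nat) : exp a ^ n = exp (INR n * a).
Proof.
  induction n. simpl. rewrite Rmult_0_l, exp_0. reflexivity.
  simpl pow. rewrite IHn, S_INR, <- exp_plus. f_equal. ring.
Qed.

Lemma pow_le_exp (u : R) (n : nat) : 0 <= u -> (1 + u) ^ n <= exp (INR n * u).
Proof.
  intros Hu. rewrite <- pow_exp. apply pow_incr. split. lra. apply exp_ineq1_le.
Qed.

Lemma exp_half_lt2 : exp (1/2) < 2.
Proof.
  assert (H : exp (1/2) * exp (1/2) = exp 1) by (rewrite <- exp_plus; f_equal; lra).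
  pose proof exp_le_3. pose proof (exp_pos (1/2)). nra.
Qed.

Lemma nat_ceil (A : R) : 0 <= A -> exists n : nat, A <= INR n <= A + 1.
Proof.
  intros HA. destruct (archimed A) as [H1 H2].
  assert (Hz : (0 <= up A)%Z) by (apply le_IZR; lra).
  exists (Z.to_nat (up A)). rewrite INR_IZR_INZ, Z2Nat.id by exact Hz. lra.
Qed.

Lemma nat_min (P : nat -> Prop) (n : nat) : P n ->
  exists k, P k /\ (k <= n)%nat /\ forall j, (j < k)%nat -> ~ P j.
Proof.
  revert n. intros n. induction n as [n IH] using (well_founded_induction lt_wf).
  intros Hn.
  destruct (classic (exists j, (j < n)%nat /\ P j)) as [[j [Hj Pj]]|Hno].
  - destruct (IH j Hj Pj) as [k [Pk [Hk Hmin]]]. exists k. split; auto. split; auto. lia.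
  - exists n. split; auto. split; auto. intros j Hj Pj. apply Hno. exists j; auto.
Qed.

Lemma nat_cross (P : nat -> Prop) (lo hi : nat) : (lo <= hi)%nat -> P lo -> ~ P hi ->
  exists a, (lo <= a)%nat /\ (a < hi)%nat /\ P a /\ ~ P (S a).
Proof.
  induction hi; intros Hle Plo Phi.
  - assert (lo = 0%nat) by lia. subst. contradiction.
  - destruct (Nat.eq_dec lo (S hi)) as [E|E]. subst. contradiction.
    destruct (classic (P hi)) as [Ph|Ph].
    + exists hi. repeat split; auto; lia.
    + destruct (IHhi ltac:(lia) Plo Ph) as [a [H1 [H2 [H3 H4]]]].
      exists a. repeat split; auto.
Qed.

Lemma ln_le_x (y : R) : 0 < y -> ln y <= y - 1.
Proof. intros Hy. pose proof (exp_ineq1_le (ln y)). rewrite exp_ln in H by exact Hy. lra. Qed.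

Lemma ln_le_mono (a b : R) : 0 < a -> a <= b -> ln a <= ln b.
Proof. intros Ha Hab. destruct Hab as [H|H]. left; apply ln_increasing; auto. subst; lra. Qed.

Lemma ln_small (e : R) : 0 < e -> exists Y, 0 < Y /\ forall y, Y <= y -> ln y <= e * y.
Proof.
  intros He. exists (4 / (e * e) + 1). split.
  { assert (0 < e * e) by nra. assert (0 < 4 / (e*e)) by (apply Rdiv_lt_0_compat; lra). lra. }
  intros y Hy.
  assert (0 < e * e) by nra. assert (0 < 4 / (e*e)) by (apply Rdiv_lt_0_compat; lra).
  assert (Hy0 : 0 < y) by lra.
  assert (Hs : 0 < sqrt y) by (apply sqrt_lt_R0; lra).
  assert (Hss := sqrt_sqrt y ltac:(lra)).
  assert (Hl : ln y = 2 * ln (sqrt y)).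
  { rewrite <- Hss at 1. rewrite ln_mult by lra. ring. }
  assert (ln (sqrt y) <= sqrt y - 1) by (apply ln_le_x; lra).
  assert (Hb : 4 / (e * e) <= sqrt y * sqrt y) by lra.
  assert (2 <= e * sqrt y).
  { apply Rmult_le_compat_l with (r := e * e) in Hb; [|lra].
    replace (e * e * (4 / (e * e))) with 4 in Hb by (field; lra).
    assert (Hw : 0 < e * sqrt y) by nra.
    assert (Hw2 : 4 <= (e * sqrt y) * (e * sqrt y)) by (eapply Rle_trans; [exact Hb| right; ring]).
    nra. }
  nra.
Qed.

Lemma core (x : R) (N N2 k lo : nat) : 0 < x -> (1 <= lo)%nat -> (1 <= N2)%nat -> (2 * N2 <= N)%nat ->
  Pr (INR lo) k < 2 * (x * INR (fact k)) ->
  2 * (x * INR (fact k)) <= Pr (INR N2) k ->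
  exists a B : nat, (lo <= a)%nat /\ INR a < (INR B + 1) * (2 * (INR k + 1) * (INR k + 1)) /\
    Rabs (rho N x) <= (1 - 3 * (/ (8 * 2 ^ k)) ^ 2) ^ B.
Proof.
  intros Hx Hlo HN2 HN Plo PN2.
  set (W := x * INR (fact k)) in *.
  assert (HW : 0 < W) by (unfold W; apply Rmult_lt_0_compat; auto; apply lt_0_INR, lt_O_fact).
  assert (Hlo' : (lo <= N2)%nat).
  { destruct (le_lt_dec lo N2) as [?|Hlt]; auto. exfalso.
    assert (Pr (INR N2) k <= Pr (INR lo) k).
    { apply Pr_mono. apply lt_0_INR; lia. apply le_INR; lia. }
    lra. }
  destruct (nat_cross (fun n => Pr (INR n) k < 2 * W) lo N2 Hlo' Plo ltac:(lra))
    as [a [Ha1 [Ha2 [Pa Pa1]]]].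
  apply Rnot_lt_le in Pa1.
  set (d := (2 * (k + 1) * (k + 1))%nat).
  assert (Hd : (0 < d)%nat) by (unfold d; lia).
  set (B := (a / d)%nat).
  pose proof (Nat.div_mod a d ltac:(lia)) as Hdm.
  pose proof (Nat.mod_upper_bound a d ltac:(lia)) as Hmu.
  fold B in Hdm.
  set (s := (B * (k + 1))%nat).
  assert (Hs1 : (2 * s * (k + 1) <= a)%nat) by (unfold s, d in *; nia).
  assert (Hs2 : (2 * s <= a)%nat) by nia.
  assert (Has : (a + s <= N)%nat) by lia.
  exists a, B. split; auto. split.
  { assert (Hr : (a < (B + 1) * d)%nat) by nia.
    apply lt_INR in Hr. rewrite mult_INR, plus_INR in Hr. unfold d in Hr.
    rewrite !mult_INR, !plus_INR in Hr. simpl in Hr. lra. }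
  assert (Hpk : 1 <= 2 ^ k) by (apply pow_R1_Rle; lra).
  set (dl := / (8 * 2 ^ k)).
  assert (Hdl : 0 < dl <= 1/8).
  { unfold dl. split. apply Rinv_0_lt_compat; lra.
    replace (1/8) with (/8) by field. apply Rinv_le_contravar; lra. }
  assert (Hq : 0 <= 1 - 3 * dl ^ 2) by nra.
  eapply Rle_trans. apply (rho_mono (a + B * (k + 1))). exact Has.
  apply rho_iter; auto.
  intros i Hi.
  assert (Ha0 : 0 < INR a) by (apply lt_0_INR; lia).
  assert (Hblk : 2 * W <= Pr (INR (S (a + i * (k + 1)))) k <= 4 * W).
  { split.
    - eapply Rle_trans. exact Pa1. apply Pr_mono. apply lt_0_INR; lia. apply le_INR; lia.
    - apply Rle_trans with (Pr (INR (a + s)) k).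
      { apply Pr_mono. apply lt_0_INR; lia. apply le_INR. unfold s. nia. }
      rewrite plus_INR. eapply Rle_trans. apply Pr_shift_bound; auto. apply pos_INR.
      eapply Rle_trans. apply Rmult_le_compat_l. apply Rlt_le, Pr_pos; auto.
      apply pow_le_exp. apply Rmult_le_pos. apply pos_INR. apply Rlt_le, Rinv_0_lt_compat; auto.
      assert (INR (S k) * (INR s / INR a) <= 1/2).
      { apply le_INR in Hs1. rewrite !mult_INR, plus_INR in Hs1. simpl in Hs1. rewrite S_INR.
        apply (Rmult_le_reg_r (INR a)); auto. field_simplify; try lra. }
      assert (exp (INR (S k) * (INR s / INR a)) < 2).
      { eapply Rle_lt_trans; [| apply exp_half_lt2]. destruct H as [H|H].
        left; apply exp_increasing; auto. rewrite H; lra. }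
      pose proof (Pr_pos (INR a) k Ha0). nra. }
  destruct (block_bad x (S (a + i * (k + 1))) k ltac:(lia) Hblk) as [j [Hj Hz]].
  exists j. split; auto.
  change (S (a + i * (k + 1)) + j)%nat with (S (a + i * (k + 1) + j)) in Hz.
  replace (PI * x / INR (S (a + i * (k + 1) + j))) with (PI * (x / INR (S (a + i * (k + 1) + j))))
    by (unfold Rdiv; ring).
  apply cos_far; [lra | lra | exact Hz].
Qed.

Lemma exp_mono (a b : R) : a <= b -> exp a <= exp b.
Proof. intros [H|H]. left; apply exp_increasing; auto. subst; lra. Qed.

Lemma fact_le_pow (n : nat) : INR (fact n) <= INR n ^ n.
Proof.
  induction n. simpl; lra.
  rewrite fact_simpl, mult_INR. change (INR (S n) ^ S n) with (INR (S n) * INR (S n) ^ n).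
  apply Rmult_le_compat_l. apply pos_INR.
  eapply Rle_trans. exact IHn. apply pow_incr. split. apply pos_INR. apply le_INR; lia.
Qed.

Lemma exp_minus_ln3 (N : R) : 0 < N -> exp (ln N - ln 3) = N / 3.
Proof.
  intros H. unfold Rminus. rewrite exp_plus, exp_Ropp, !exp_ln by lra. reflexivity.
Qed.

Lemma main_N (C C' l2 sg eta e1 e2 Y1 Y2 : R) (k0 N : nat) (x : R) :
  ln 2 = l2 -> 0 < l2 -> 0 < C -> sg = 1 - C * (2 * l2) -> 0 < sg <= 1 ->
  C' * (2 * l2) = 1 - 3 * sg / 4 -> eta = sg / 8 ->
  e1 = (C' - C) / (8 * C' ^ 2) -> e2 = sg / (16 * C') -> 0 < C' ->
  4 <= sg * INR k0 ->
  (forall y, Y1 <= y -> ln y <= e1 * y) -> (forall y, Y2 <= y -> ln y <= e2 * y) ->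
  3 <= INR N ->
  1 <= C' * ln (INR N) -> Y1 <= C' * ln (INR N) -> Y2 <= C' * ln (INR N) + 1 ->
  ln 3 <= ln (INR N) -> 1 <= ln (INR N) ->
  C' * ln 3 + ln 2 <= (C' - C) / 2 * ln (INR N) ->
  2 * (INR k0 * (2 * l2) + ln 102 + 4 * e2) + ln 3 <= (1 - sg / 2) * ln (INR N) ->
  4 * ((2 * l2 + ln 102 + 4 * e2) + ln 3) + sg * (2 * l2 + ln 102 + 4 * e2) <= sg * ln (INR N) ->
  INR N <= x -> x <= exp (C * ln (INR N) ^ 2) ->
  Rabs (rho N x) <= exp (- (PI ^ 2 / 400 ^ 2) * exp (eta * ln (INR N))).
Proof.
  intros Hl2 Hl2p HC Hsg Hsg1 HC' Heta He1 He2 HC'p Hk0 HY1 HY2 HN3.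
  set (L := ln (INR N)).
  intros c1 c2 c3 c4 c5 c6 c7 c8 Hx1 Hx2.
  assert (HCC : C < C') by nra.
  assert (He1p : 0 < e1) by (rewrite He1; apply Rdiv_lt_0_compat; [lra | nra]).
  assert (He2p : 0 < e2) by (rewrite He2; apply Rdiv_lt_0_compat; nra).
  assert (HNp : 0 < INR N) by lra.
  assert (Hxp : 0 < x) by lra.
  assert (HlnN : exp L = INR N) by (apply exp_ln; lra).
  assert (Hlnx : ln x <= C * L ^ 2).
  { rewrite <- (ln_exp (C * L ^ 2)). apply ln_le_mono; lra. }
  set (N2 := (N / 2)%nat).
  assert (HN3' : (3 <= N)%nat) by (apply INR_le; simpl; lra).
  pose proof (Nat.div_mod N 2 ltac:(lia)) as Hdm.
  pose proof (Nat.mod_upper_bound N 2 ltac:(lia)) as Hmu. fold N2 in Hdm.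
  assert (HN2a : (2 * N2 <= N)%nat) by lia.
  assert (HN2b : (N <= 3 * N2)%nat) by lia.
  assert (HN2c : (1 <= N2)%nat) by lia.
  assert (HN2r : INR N / 3 <= INR N2).
  { apply le_INR in HN2b. rewrite mult_INR in HN2b. simpl in HN2b. lra. }
  assert (HN2r' : 2 * INR N2 <= INR N).
  { apply le_INR in HN2a. rewrite mult_INR in HN2a. simpl in HN2a. lra. }
  assert (HN2p : 0 < INR N2) by lra.
  assert (HE3 : exp (L - ln 3) = INR N / 3) by (apply exp_minus_ln3; lra).
  destruct (nat_ceil (C' * L) ltac:(lra)) as [K [HK1 HK2]].
  set (Q := fun k => 2 * (x * INR (fact k)) <= Pr (INR N2) k).
  assert (QK : Q K).
  { unfold Q.
    assert (HKp : 0 < INR K) by lra.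
    assert (HlnK : ln (INR K) <= e1 * INR K) by (apply HY1; lra).
    assert (Hineq : ln 2 + C * L ^ 2 + INR K * ln (INR K) <= INR (S K) * (L - ln 3)).
    { rewrite S_INR.
      assert (INR K * ln (INR K) <= e1 * INR K * INR K) by nra.
      assert (INR K <= 2 * C' * L) by lra.
      assert (e1 * INR K * INR K <= e1 * (2 * C' * L) * (2 * C' * L)) by (apply Rmult_le_compat; nra).
      assert (e1 * (2 * C' * L) * (2 * C' * L) = (C' - C) / 2 * L * L).
      { rewrite He1. field. lra. }
      assert (C' * ln 3 * L + ln 2 <= (C' - C) / 2 * L * L) by nra.
      assert (C' * L * (L - ln 3) <= INR K * (L - ln 3)) by nra.
      assert (0 <= ln 2) by lra.
      nra. }
    apply Rle_trans with (exp (ln 2 + C * L ^ 2 + INR K * ln (INR K))).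
    { rewrite !exp_plus, exp_ln by lra.
      rewrite <- pow_exp, exp_ln by lra.
      pose proof (fact_le_pow K). pose proof (exp_pos (C * L ^ 2)).
      assert (0 <= INR (fact K)) by apply pos_INR.
      assert (x * INR (fact K) <= exp (C * L ^ 2) * INR K ^ K) by (apply Rmult_le_compat; lra).
      lra. }
    eapply Rle_trans. apply exp_mono. exact Hineq.
    rewrite <- pow_exp, HE3.
    eapply Rle_trans; [| apply Pr_lower; exact HN2p].
    apply pow_incr. lra. }
  destruct (nat_min Q K QK) as [k [Qk [HkK Hkmin]]].
  destruct k as [|k1].
  { exfalso. unfold Q in Qk. simpl in Qk. lra. }
  assert (NQ := Hkmin k1 ltac:(lia)). unfold Q in NQ, Qk. apply Rnot_le_lt in NQ.
  set (k := S k1) in *.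
  set (W := x * INR (fact k)).
  assert (HNk : INR N2 ^ k < 2 * W).
  { unfold W. eapply Rle_lt_trans. apply Pr_lower; exact HN2p.
    eapply Rlt_le_trans. exact NQ. unfold k. rewrite fact_simpl, mult_INR.
    pose proof (pos_INR (fact k1)). rewrite S_INR. pose proof (pos_INR k1).
    assert (INR (fact k1) <= (INR k1 + 1) * INR (fact k1)) by nra.
    apply Rmult_le_compat_l; [lra|]. apply Rmult_le_compat_l; lra. }
  set (kk := INR k).
  assert (Hkk1 : 1 <= kk) by (unfold kk, k; rewrite S_INR; pose proof (pos_INR k1); lra).
  assert (HkkK : kk <= INR K) by (apply le_INR; exact HkK).
  set (p := 2 ^ k).
  assert (Hp1 : 1 <= p) by (apply pow_R1_Rle; lra).
  set (ee := exp (eta * L)).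
  assert (Hee : 1 <= ee).
  { unfold ee. rewrite <- exp_0. apply exp_mono. rewrite Heta. nra. }
  set (A := 100 * (p * p) * ((kk + 1) * (kk + 1)) * ee).
  assert (HA0 : 100 <= A).
  { unfold A. assert (1 <= p * p) by nra. assert (1 <= (kk+1)*(kk+1)) by nra.
    assert (1 <= (p*p) * ((kk+1)*(kk+1))) by nra. nra. }
  destruct (nat_ceil A ltac:(lra)) as [lo [Hlo1 Hlo2]].
  assert (Hlo : (1 <= lo)%nat) by (apply INR_le; simpl; lra).
  set (Lam := ln 102 + kk * (2 * l2) + 2 * ln (kk + 1) + eta * L).
  assert (HLam : exp Lam = 102 * (p * p) * ((kk + 1) * (kk + 1)) * ee).
  { unfold Lam, ee. rewrite !exp_plus. rewrite exp_ln by lra.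
    replace (kk * (2 * l2)) with (kk * l2 + kk * l2) by ring.
    replace (2 * ln (kk + 1)) with (ln (kk + 1) + ln (kk + 1)) by ring.
    rewrite !exp_plus, exp_ln by lra.
    unfold p, kk. rewrite <- Hl2, <- pow_exp, exp_ln by lra. ring. }
  assert (HloA : INR lo + kk <= exp Lam).
  { rewrite HLam. assert (1 <= p * p) by nra.
    assert (kk + 1 <= (p * p) * ((kk + 1) * (kk + 1)) * ee).
    { assert (kk + 1 <= (kk+1)*(kk+1)) by nra.
      assert (1 <= (p*p)*ee) by nra. nra. }
    unfold A in Hlo2. nra. }
  assert (HlnK1 : ln (kk + 1) <= e2 * (C' * L + 2)).
  { eapply Rle_trans. apply ln_le_mono with (b := INR K + 1); lra.
    eapply Rle_trans. apply HY2. lra. apply Rmult_le_compat_l; lra. }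
  assert (H2e2 : 2 * e2 * C' = sg / 8) by (rewrite He2; field; lra).
  assert (HLam2 : 2 * ln (kk + 1) <= sg / 8 * L + 4 * e2) by nra.
  assert (HkLam : INR (S k) * Lam <= kk * (L - ln 3)).
  { rewrite S_INR. fold kk.
    destruct (Rle_dec kk (INR k0)) as [Hsm|Hbig].
    - set (X := INR k0 * (2 * l2) + ln 102 + 4 * e2 + sg / 4 * L).
      assert (Lam <= X) by (unfold Lam, X; rewrite Heta; nra).
      assert (0 <= X).
      { unfold X. pose proof (pos_INR k0). assert (0 < ln 102) by (rewrite <- ln_1; apply ln_increasing; lra). nra. }
      assert (2 * X <= L - ln 3) by (unfold X in *; nra).
      assert ((kk+1)*Lam <= (kk+1)*X) by (apply Rmult_le_compat_l; lra).
      assert (0 <= (kk - 1) * X) by (apply Rmult_le_pos; lra).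
      assert (0 <= kk * (L - ln 3 - 2 * X)) by (apply Rmult_le_pos; lra).
      lra.
    - assert (Hkb : kk * (2 * l2) <= (1 - 3 * sg / 4) * L + 2 * l2) by nra.
      set (cc1 := 2 * l2 + ln 102 + 4 * e2).
      set (Y := cc1 + (1 - sg / 2) * L).
      assert (Lam <= Y) by (unfold Lam, Y, cc1; rewrite Heta; nra).
      assert (0 <= Y).
      { unfold Y, cc1. assert (0 < ln 102) by (rewrite <- ln_1; apply ln_increasing; lra). nra. }
      set (Z := L - ln 3 - Y).
      assert (Hl102 : 0 < ln 102) by (rewrite <- ln_1; apply ln_increasing; lra).
      assert (Hl3 : 0 < ln 3) by (rewrite <- ln_1; apply ln_increasing; lra).
      fold cc1 in c8.
      assert (Hcc1 : 0 <= cc1) by (unfold cc1; lra).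
      assert (0 <= sg * cc1) by (apply Rmult_le_pos; lra).
      assert (HZ : 0 <= Z) by (unfold Z, Y; lra).
      assert (sg * kk >= 4).
      { assert (sg * INR k0 <= sg * kk) by (apply Rmult_le_compat_l; lra). lra. }
      assert (0 <= (sg * kk - 4) * Z) by (apply Rmult_le_pos; lra).
      assert (sg * (kk * Z) >= 4 * Z) by lra.
      assert (0 <= sg * sg * L) by (apply Rmult_le_pos; [apply Rmult_le_pos|]; lra).
      assert (4 * Z >= sg * Y) by (unfold Z, Y; lra).
      assert (Y <= kk * Z).
      { apply (Rmult_le_reg_l sg); [lra|]. lra. }
      assert ((kk+1)*Lam <= (kk+1)*Y) by (apply Rmult_le_compat_l; lra).
      assert (kk * Z + kk * Y = kk * (L - ln 3)) by (unfold Z; ring).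
      lra. }
  assert (Plo : Pr (INR lo) k < 2 * W).
  { eapply Rle_lt_trans. apply Pr_upper. apply lt_0_INR; lia. fold kk.
    eapply Rle_lt_trans; [| exact HNk].
    apply Rle_trans with (exp Lam ^ S k).
    { apply pow_incr. split. pose proof (pos_INR lo); lra. exact HloA. }
    rewrite pow_exp. eapply Rle_trans. apply exp_mono. exact HkLam.
    unfold kk. rewrite <- pow_exp. apply pow_incr. rewrite HE3. lra. }
  destruct (core x N N2 k lo Hxp Hlo HN2c HN2a Plo Qk) as [a [B [Ha [HaB Hrho]]]].
  fold kk in HaB.
  eapply Rle_trans. exact Hrho.
  set (dl := / (8 * 2 ^ k)) in *.
  assert (Hdl : dl * p = /8) by (unfold dl, p; field; pose proof (pow_lt 2 k ltac:(lra)); lra).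
  assert (Hdl0 : 0 < dl) by (unfold dl; apply Rinv_0_lt_compat; pose proof (pow_lt 2 k ltac:(lra)); lra).
  assert (Hdl2 : dl * dl <= 1 / 64) by nra.
  assert (Hq0 : 0 <= 1 - 3 * dl ^ 2) by nra.
  apply Rle_trans with (exp (- (3 * dl ^ 2)) ^ B).
  { apply pow_incr. split; auto. pose proof (exp_ineq1_le (- (3 * dl ^ 2))). lra. }
  rewrite pow_exp. apply exp_mono.
  assert (HaA : A <= INR a) by (eapply Rle_trans; [exact Hlo1 | apply le_INR; exact Ha]).
  assert (HB : 50 * (p * p) * ee - 1 <= INR B).
  { assert (A < (INR B + 1) * (2 * (kk + 1) * (kk + 1))) by lra.
    unfold A in H.
    assert (0 < (kk + 1) * (kk + 1)) by nra.
    assert (100 * (p * p) * ee < (INR B + 1) * 2).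
    { apply (Rmult_lt_reg_r ((kk + 1) * (kk + 1))); auto. nra. }
    lra. }
  assert (HPI : PI ^ 2 / 400 ^ 2 <= 1 / 10000).
  { pose proof PI_4. pose proof PI_RGT_0. assert (PI ^ 2 <= 16) by nra. lra. }
  fold ee.
  assert (3 * dl ^ 2 * INR B >= 3 * dl ^ 2 * (50 * (p * p) * ee - 1)).
  { apply Rle_ge, Rmult_le_compat_l; [nra | exact HB]. }
  assert (3 * dl ^ 2 * (50 * (p * p) * ee - 1) = 150 / 64 * ee - 3 * dl ^ 2).
  { replace (dl ^ 2 * (p * p)) with ((dl * p) * (dl * p)) by ring.
    replace (3 * dl ^ 2 * (50 * (p * p) * ee - 1)) with (150 * ((dl * p) * (dl * p)) * ee - 3 * dl ^ 2) by ring.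
    rewrite Hdl. field. }
  assert (Hc0 : 0 <= PI ^ 2 / 400 ^ 2).
  { apply Rmult_le_pos; [apply pow2_ge_0 | left; apply Rinv_0_lt_compat; apply pow_lt; lra]. }
  assert (PI ^ 2 / 400 ^ 2 * ee <= 1 / 10000 * ee) by (apply Rmult_le_compat_r; lra).
  assert (Hd64 : dl ^ 2 <= 1 / 64) by (simpl; lra).
  lra.
Qed.

Lemma div_le_mul (a b L : R) : 0 < b -> a / b <= L -> a <= b * L.
Proof.
  intros Hb H. replace a with (b * (a / b)) by (field; lra).
  apply Rmult_le_compat_l; lra.
Qed.

Theorem proposition3p5 :
  forall C : R, 0 < C -> C < 1 / ln 4 ->
  exists E : R, 0 < E /\
    exists N0 : nat, forall N : nat, (N0 <= N)%nat -> (1 <= N)%nat ->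
      forall x : R, INR N <= x -> x <= exp (C * (ln (INR N)) ^ 2) ->
        Rabs (rho N x) <= exp (- (PI ^ 2 / 400 ^ 2) * exp (E * sqrt (ln x))).
Proof.
  intros C HC HC4.
  set (l2 := ln 2).
  assert (Hl2 : 0 < l2) by (unfold l2; rewrite <- ln_1; apply ln_increasing; lra).
  assert (Hl4 : ln 4 = 2 * l2) by (unfold l2; replace 4 with (2 * 2) by lra; rewrite ln_mult by lra; ring).
  rewrite Hl4 in HC4.
  assert (HC4' : C * (2 * l2) < 1).
  { apply (Rmult_lt_compat_r (2 * l2)) in HC4; [|lra]. replace (1 / (2 * l2) * (2 * l2)) with 1 in HC4 by (field; lra). lra. }
  set (sg := 1 - C * (2 * l2)).
  assert (Hsg : 0 < sg <= 1) by (unfold sg; split; nra).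
  set (C' := (1 - 3 * sg / 4) / (2 * l2)).
  assert (HC'e : C' * (2 * l2) = 1 - 3 * sg / 4) by (unfold C'; field; lra).
  assert (HC'p : 0 < C') by (unfold C'; apply Rdiv_lt_0_compat; lra).
  assert (HCs : C * (2 * l2) = 1 - sg) by (unfold sg; ring).
  assert (HCC : C < C') by (apply (Rmult_lt_reg_r (2 * l2)); lra).
  set (eta := sg / 8).
  set (e1 := (C' - C) / (8 * C' ^ 2)).
  set (e2 := sg / (16 * C')).
  assert (He1 : 0 < e1) by (unfold e1; apply Rdiv_lt_0_compat; [lra | nra]).
  assert (He2 : 0 < e2) by (unfold e2; apply Rdiv_lt_0_compat; nra).
  destruct (nat_ceil (4 / sg)) as [k0 [Hk0 _]].
  { left; apply Rdiv_lt_0_compat; lra. }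
  assert (Hk0' : 4 <= sg * INR k0) by (apply div_le_mul; lra).
  destruct (ln_small e1 He1) as [Y1 [HY1p HY1]].
  destruct (ln_small e2 He2) as [Y2 [HY2p HY2]].
  set (cc := 2 * l2 + ln 102 + 4 * e2).
  set (t1 := 1 / C'). set (t2 := Y1 / C'). set (t3 := Y2 / C').
  set (t4 := (C' * ln 3 + l2) / ((C' - C) / 2)).
  set (t5 := (2 * (INR k0 * (2 * l2) + ln 102 + 4 * e2) + ln 3) / (1 - sg / 2)).
  set (t6 := (4 * (cc + ln 3) + sg * cc) / sg).
  set (T := Rabs t1 + Rabs t2 + Rabs t3 + Rabs t4 + Rabs t5 + Rabs t6 + Rabs (ln 3) + 1).
  assert (HT : t1 <= T /\ t2 <= T /\ t3 <= T /\ t4 <= T /\ t5 <= T /\ t6 <= T /\ ln 3 <= T /\ 1 <= T).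
  { unfold T. pose proof (Rle_abs t1). pose proof (Rle_abs t2). pose proof (Rle_abs t3).
    pose proof (Rle_abs t4). pose proof (Rle_abs t5). pose proof (Rle_abs t6). pose proof (Rle_abs (ln 3)).
    pose proof (Rabs_pos t1). pose proof (Rabs_pos t2). pose proof (Rabs_pos t3).
    pose proof (Rabs_pos t4). pose proof (Rabs_pos t5). pose proof (Rabs_pos t6). pose proof (Rabs_pos (ln 3)).
    lra. }
  destruct (nat_ceil (exp T)) as [M [HM _]].
  { left; apply exp_pos. }
  exists (eta / sqrt C). split.
  { apply Rdiv_lt_0_compat. unfold eta; lra. apply sqrt_lt_R0; lra. }
  exists (Nat.max M 3). intros N HN _ x Hx1 Hx2.
  assert (HN3 : 3 <= INR N) by (replace 3 with (INR 3) by (simpl; lra); apply le_INR; lia).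
  assert (HNM : exp T <= INR N) by (eapply Rle_trans; [exact HM | apply le_INR; lia]).
  set (L := ln (INR N)) in *.
  assert (HLT : T <= L) by (rewrite <- (ln_exp T); apply ln_le_mono; [apply exp_pos | exact HNM]).
  destruct HT as [T1 [T2 [T3 [T4 [T5 [T6 [T7 T8]]]]]]].
  assert (HL0 : 0 <= L) by lra.
  assert (Hmain : Rabs (rho N x) <= exp (- (PI ^ 2 / 400 ^ 2) * exp (eta * L))).
  { apply (main_N C C' l2 sg eta e1 e2 Y1 Y2 k0 N x); auto; try reflexivity; fold L; try fold l2; try lra.
    - apply div_le_mul; auto. unfold t1 in T1; lra.
    - apply div_le_mul; auto. unfold t2 in T2; lra.
    - assert (Y2 <= C' * L) by (apply div_le_mul; auto; unfold t3 in T3; lra). lra.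
    - apply div_le_mul; [lra|]. unfold t4 in T4; lra.
    - apply div_le_mul; [lra|]. unfold t5 in T5; lra.
    - fold cc. apply div_le_mul; [lra|]. unfold t6 in T6; lra. }
  eapply Rle_trans. exact Hmain.
  apply exp_mono.
  assert (Hc0 : 0 <= PI ^ 2 / 400 ^ 2).
  { apply Rmult_le_pos; [apply pow2_ge_0 | left; apply Rinv_0_lt_compat; apply pow_lt; lra]. }
  assert (Hxp : 1 <= x) by lra.
  assert (Hlnx0 : 0 <= ln x) by (rewrite <- ln_1; apply ln_le_mono; lra).
  assert (Hlnx : ln x <= C * L ^ 2) by (rewrite <- (ln_exp (C * L ^ 2)); apply ln_le_mono; lra).
  assert (HsC : 0 < sqrt C) by (apply sqrt_lt_R0; lra).
  assert (Hsq : sqrt (ln x) <= sqrt C * L).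
  { eapply Rle_trans. apply sqrt_le_1_alt. exact Hlnx.
    rewrite sqrt_mult_alt by lra. rewrite sqrt_pow2 by lra. lra. }
  assert (HE : eta / sqrt C * sqrt (ln x) <= eta * L).
  { apply Rle_trans with (eta / sqrt C * (sqrt C * L)).
    apply Rmult_le_compat_l; [left; apply Rdiv_lt_0_compat; unfold eta; lra | exact Hsq].
    right. field. lra. }
  assert (exp (eta / sqrt C * sqrt (ln x)) <= exp (eta * L)) by (apply exp_mono; exact HE).
  assert (PI ^ 2 / 400 ^ 2 * exp (eta / sqrt C * sqrt (ln x)) <= PI ^ 2 / 400 ^ 2 * exp (eta * L))
    by (apply Rmult_le_compat_l; auto).
  lra.
Qed.
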